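(* Let $(P_n)$ be a sequence of finite posets. Then the following are equivalent: (i) $t(Q,P_n)$ converges for every poset $Q\in\mathcal P$, and $|P_n|$ converges to some limit in $\mathbb N\cup\{\infty\}$; (ii) $t_{\mathrm{inj}}(Q,P_n)$ converges for every $Q\in\mathcal P$; (iii) $t_{\mathrm{ind}}(Q,P_n)$ converges for every $Q\in\mathcal P$; (iv) $t(F,P_n)$ converges for every digraph $F\in\mathcal D$, and $|P_n|$ converges to some limit in $\mathbb N\cup\{\infty\}$; (v) $t_{\mathrm{inj}}(F,P_n)$ converges for every $F\in\mathcal D$; (vi) $t_{\mathrm{ind}}(F,P_n)$ converges for every $F\in\mathcal D$.
   Context: A digraph has a vertex set $V$ and edge set $E\subseteq V\times V$ (loops allowed); $\mathcal D$ is the set of isomorphism classes of finite nonempty digraphs. A poset (nonempty set with strict partial order $<$) is regarded as the digraph with an edge $i\to j$ iff $i<j$; $\mathcal P\subset\mathcal D$ is the set of isomorphism classes of finite nonempty posets. For finite digraphs $F,G$: $t(F,G)$ is the proportion of all maps $\varphi:V(F)\to V(G)$ that are homomorphisms ($i\to j$ in $F$ implies $\varphi(i)\to\varphi(j)$ in $G$); $t_{\mathrm{inj}}(F,G)$ is the proportion of injective maps that are homomorphisms; $t_{\mathrm{ind}}(F,G)$ is the proportion of injective maps $\varphi$ with ($i\to j$ in $F$ iff $\varphi(i)\to\varphi(j)$ in $G$) for all $i,j$; if $|F|>|G|$, $t_{\mathrm{inj}}(F,G)=t_{\mathrm{ind}}(F,G)=0$. For posets these coincide with the poset versions. *)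

(* Defs.v *)
From Stdlib Require Import Reals.
From mathcomp Require Import all_boot.
Set Implicit Arguments. Unset Strict Implicit. Unset Printing Implicit Defensive.

Record digraph := Digraph { dv : nat; de : rel 'I_dv }.

Definition nonempty (G : digraph) : Prop := (0 < dv G)%N.

(* A poset (strict partial order) viewed as digraph: i -> j iff i < j. *)
Definition is_poset (G : digraph) : Prop :=
  (forall i, ~~ @de G i i) /\ (forall i j k, @de G i j -> @de G j k -> @de G i k).

Definition is_hom (F G : digraph) (f : {ffun 'I_(dv F) -> 'I_(dv G)}) : bool :=
  [forall i, forall j, @de F i j ==> @de G (f i) (f j)].

Definition is_ind (F G : digraph) (f : {ffun 'I_(dv F) -> 'I_(dv G)}) : bool :=
  injectiveb f && [forall i, forall j, @de F i j == @de G (f i) (f j)].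

Open Scope R_scope.

Definition t (F G : digraph) : R :=
  INR #|[set f : {ffun 'I_(dv F) -> 'I_(dv G)} | is_hom f]| / INR (dv G ^ dv F)%N.

Definition t_inj (F G : digraph) : R :=
  if (dv G < dv F)%N then 0
  else INR #|[set f : {ffun 'I_(dv F) -> 'I_(dv G)} | injectiveb f && is_hom f]|
       / INR #|[set f : {ffun 'I_(dv F) -> 'I_(dv G)} | injectiveb f]|.

Definition t_ind (F G : digraph) : R :=
  if (dv G < dv F)%N then 0
  else INR #|[set f : {ffun 'I_(dv F) -> 'I_(dv G)} | is_ind f]|
       / INR #|[set f : {ffun 'I_(dv F) -> 'I_(dv G)} | injectiveb f]|.

Definition converges (u : nat -> R) : Prop := exists l, Un_cv u l.

Definition nat_converges_ext (a : nat -> nat) : Prop :=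
  (exists m n0, forall n, (n0 <= n)%N -> a n = m) \/
  (forall M, exists n0, forall n, (n0 <= n)%N -> (M <= a n)%N).

(* Main.v *)
Require Import Defs.
From Stdlib Require Import Reals Lra Lia Psatz ZArith Classical.
From mathcomp Require Import all_boot zify.

Module Part1.
Set Implicit Arguments. Unset Strict Implicit. Unset Printing Implicit Defensive.
Local Open Scope nat_scope.

Definition homc (F G : digraph) : nat :=
  #|[set f : {ffun 'I_(dv F) -> 'I_(dv G)} | is_hom f]|.
Definition injc (F G : digraph) : nat :=
  #|[set f : {ffun 'I_(dv F) -> 'I_(dv G)} | injectiveb f && is_hom f]|.

Section Kernel.
Variable k m : nat.
Definition rf (f : {ffun 'I_k -> 'I_m}) : {ffun 'I_k -> 'I_k} :=
  [ffun i => odflt i [pick j | f j == f i]].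
Definition valid (r : {ffun 'I_k -> 'I_k}) : bool :=
  [forall i, r i == odflt i [pick j | r j == r i]].

Lemma rf_eq (f : {ffun 'I_k -> 'I_m}) i : f (rf f i) = f i.
Proof. rewrite ffunE; case: pickP => [j /eqP //|]; by []. Qed.

Lemma rf_cong (f : {ffun 'I_k -> 'I_m}) i j : f i = f j -> rf f i = rf f j.
Proof.
move=> e; rewrite !ffunE (@eq_pick _ (fun x => f x == f i) (fun x => f x == f j)).
  case: pickP => [x _ //|/(_ j)]; by rewrite eqxx.
by move=> x; rewrite e.
Qed.

Lemma rf_eqE (f : {ffun 'I_k -> 'I_m}) i j : (rf f i == rf f j) = (f i == f j).
Proof.
apply/eqP/eqP => [e|/rf_cong //]; by rewrite -rf_eq e rf_eq.
Qed.

Lemma valid_rf (f : {ffun 'I_k -> 'I_m}) : valid (rf f).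
Proof.
apply/forallP => i; rewrite {1}ffunE.
rewrite (@eq_pick _ (fun x => f x == f i) (fun x => rf f x == rf f i)) //.
by move=> x; rewrite rf_eqE.
Qed.

Lemma valid_idem r i : valid r -> r (r i) = r i.
Proof.
move=> /forallP /(_ i); case: pickP => [j /eqP rj /= /eqP e|/(_ i)].
  by rewrite e rj e.
by rewrite eqxx.
Qed.

Lemma valid_char r (f : {ffun 'I_k -> 'I_m}) : valid r -> (forall i j, (f i == f j) = (r i == r j)) -> rf f = r.
Proof.
move=> /forallP vr H; apply/ffunP => i; rewrite ffunE (eqP (vr i)).
by rewrite (@eq_pick _ (fun x => f x == f i) (fun x => r x == r i)) // => x; rewrite H.
Qed.

Definition idf : {ffun 'I_k -> 'I_k} := [ffun i => i].

Lemma valid_idf : valid idf.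
Proof.
rewrite /valid; apply/forallP => i; rewrite !ffunE; case: pickP => [j|/(_ i)]; last by rewrite ffunE eqxx.
by rewrite !ffunE => /eqP ->.
Qed.

Lemma rf_idf (f : {ffun 'I_k -> 'I_m}) : (rf f == idf) = injectiveb f.
Proof.
apply/eqP/injectiveP => [e i j fij|inj].
  by move: (rf_cong fij); rewrite e !ffunE.
apply: valid_char; first exact: valid_idf.
by move=> i j; rewrite !ffunE; apply/eqP/eqP => [/inj|->].
Qed.

Definition reps (r : {ffun 'I_k -> 'I_k}) := [set i | r i == i].

Lemma reps_in r i : valid r -> r i \in reps r.
Proof. by move=> v; rewrite inE valid_idem. Qed.

Lemma reps_lt r : valid r -> r != idf -> #|reps r| < k.
Proof.
move=> v; apply: contraR; rewrite -leqNgt => H.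
have: reps r == [set: 'I_k] by rewrite eqEcard subsetT cardsT card_ord.
move=> /eqP e; apply/eqP/ffunP => i; rewrite ffunE.
have : i \in reps r by rewrite e inE.
by rewrite inE => /eqP.
Qed.
End Kernel.

Definition quot (F : digraph) (r : {ffun 'I_(dv F) -> 'I_(dv F)}) : digraph :=
  @Digraph #|reps r| (fun a b => [exists i, exists j,
      [&& r i == enum_val a, r j == enum_val b & @de F i j]]).

Arguments quot : clear implicits.

Lemma quot_nonempty F r : valid r -> nonempty F -> nonempty (quot F r).
Proof.
move=> v; rewrite /nonempty /= => k0.
apply/card_gt0P; exists (r (Ordinal k0)); exact: reps_in.
Qed.

Lemma fiber_card F G r : valid r ->
  #|[set f : {ffun 'I_(dv F) -> 'I_(dv G)} | is_hom f && (rf f == r)]| = injc (quot F r) G.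
Proof.
move=> v; rewrite /injc.
set A := [set f | _]; set B := [set g | _].
pose phi (f : {ffun 'I_(dv F) -> 'I_(dv G)}) : {ffun 'I_(dv (quot F r)) -> 'I_(dv G)} :=
  [ffun a => f (enum_val a)].
have rep f : f \in A -> forall i, f i = f (enum_val (enum_rank_in (reps_in i v) (r i))).
  move=> fA i; rewrite enum_rankK_in ?reps_in //.
  by move: fA; rewrite inE => /andP [_ /eqP <-]; rewrite rf_eq.
rewrite -(card_in_imset (f := phi)); last first.
  move=> f1 f2 f1A f2A e; apply/ffunP => i.
  rewrite (rep _ f1A) (rep _ f2A).
  by move/ffunP: e => /(_ (enum_rank_in (reps_in i v) (r i))); rewrite !ffunE.
suff -> : phi @: A = B by [].
apply/setP => g; apply/imsetP/idP.
- move=> [f fA ->]; move: fA; rewrite !inE => /andP [hf /eqP rfr]; apply/andP; split.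
    apply/injectiveP => a b; rewrite !ffunE => e.
    have := rf_cong e; rewrite rfr.
    have ea := enum_valP a; have eb := enum_valP b.
    rewrite inE in ea; rewrite inE in eb; rewrite (eqP ea) (eqP eb); exact: enum_val_inj.
  apply/forallP => a; apply/forallP => b; apply/implyP => /existsP [i /existsP [j]].
  move=> /and3P [/eqP ri /eqP rj fij]; rewrite !ffunE -ri -rj.
  have -> : f (r i) = f i by rewrite -rfr rf_eq.
  have -> : f (r j) = f j by rewrite -rfr rf_eq.
  by move: hf => /forallP /(_ i) /forallP /(_ j) /implyP; apply.
- rewrite inE => /andP [/injectiveP ig hg].
  pose f : {ffun 'I_(dv F) -> 'I_(dv G)} := [ffun i => g (enum_rank_in (reps_in i v) (r i))].
  have key i j : (f i == f j) = (r i == r j).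
    rewrite !ffunE; apply/eqP/eqP => [/ig e|e].
      have := congr1 enum_val e; rewrite !enum_rankK_in ?reps_in //.
    congr (g _); apply: enum_val_inj; rewrite !enum_rankK_in ?reps_in //.
  exists f.
    rewrite inE; apply/andP; split; last by apply/eqP; apply: valid_char.
    apply/forallP => i; apply/forallP => j; apply/implyP => fij; rewrite !ffunE.
    move: hg => /forallP /(_ (enum_rank_in (reps_in i v) (r i))) /forallP.
    move=> /(_ (enum_rank_in (reps_in j v) (r j))) /implyP; apply.
    apply/existsP; exists i; apply/existsP; exists j.
    by rewrite !enum_rankK_in ?reps_in ?eqxx.
  apply/ffunP => a; rewrite !ffunE.
  have ea := enum_valP a; rewrite inE in ea.
  congr (g _); apply: enum_val_inj; rewrite enum_rankK_in ?reps_in //.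
  by rewrite (eqP ea).
Qed.

Lemma card_fibers (T U : finType) (A : {set T}) (g : T -> U) (Q : pred U) :
  (forall x, x \in A -> Q (g x)) ->
  #|A| = \sum_(u | Q u) #|[set x in A | g x == u]|.
Proof.
move=> H; rewrite -sum1_card (partition_big g Q) //.
apply: eq_bigr => u _; rewrite -sum1_card; apply: eq_bigl => x; by rewrite inE.
Qed.

Lemma hom_decomp F G :
  homc F G = \sum_(r | valid r) injc (quot F r) G.
Proof.
rewrite /homc (@card_fibers _ _ _ (@rf (dv F) (dv G)) (@valid (dv F))); last by move=> x _; exact: valid_rf.
apply: eq_bigr => r vr; rewrite -fiber_card //; apply: eq_card => f; by rewrite !inE.
Qed.

Lemma hom_decomp2 F G :
  homc F G = injc F G + \sum_(r | valid r && (r != idf _)) injc (quot F r) G.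
Proof.
rewrite hom_decomp (bigD1 (idf (dv F))) /=; last exact: valid_idf.
congr (_ + _); rewrite -fiber_card ?valid_idf //; apply: eq_card => f; by rewrite !inE rf_idf andbC.
Qed.

End Part1.
Import Part1.

Module Part2.
Set Implicit Arguments. Unset Strict Implicit. Unset Printing Implicit Defensive.
Local Open Scope nat_scope.

Definition cl (F : digraph) : digraph :=
  @Digraph (dv F) (fun i j => [exists l, @de F i l && connect (@de F) l j]).

Lemma conn_hom F G (f : {ffun 'I_(dv F) -> 'I_(dv G)}) : is_poset G -> is_hom f ->
  forall l j, connect (@de F) l j -> l = j \/ @de G (f l) (f j).
Proof.
move=> [_ trG] /forallP hf l j /connectP [p].
elim: p l => [|x p IH] l /= ; first by move=> _ ->; left.
move=> /andP [elx px] ej; have flx : @de G (f l) (f x).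
  by move: (hf l) => /forallP /(_ x) /implyP; apply.
case: (IH x px ej) => [<-|H]; right => //; exact: trG H.
Qed.

Lemma hom_cl F G (f : {ffun 'I_(dv F) -> 'I_(dv G)}) : is_poset G ->
  @is_hom F G f = @is_hom (cl F) G f.
Proof.
move=> pG; apply/idP/idP => hf.
  apply/forallP => i; apply/forallP => j; apply/implyP => /existsP [l /andP [eil clj]].
  have fil : @de G (f i) (f l) by move: hf => /forallP /(_ i) /forallP /(_ l) /implyP; apply.
  case: (conn_hom pG hf clj) => [<- //|H]; exact: (proj2 pG) _ _ _ fil H.
apply/forallP => i; apply/forallP => j; apply/implyP => eij.
move: hf => /forallP /(_ i) /forallP /(_ j) /implyP; apply.
by apply/existsP; exists j; rewrite eij connect0.
Qed.

Lemma homc_cl F G : is_poset G -> homc F G = homc (cl F) G.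
Proof. move=> pG; apply: eq_card => f; by rewrite !inE (hom_cl f pG). Qed.

Lemma injc_cl F G : is_poset G -> injc F G = injc (cl F) G.
Proof. move=> pG; apply: eq_card => f; by rewrite !inE (hom_cl f pG). Qed.

Lemma homc_loop F G i : is_poset G -> @de F i i -> homc F G = 0.
Proof.
move=> [irr _] eii; apply/eqP; rewrite cards_eq0; apply/eqP/setP => f; rewrite !inE.
apply/negP => /forallP /(_ i) /forallP /(_ i) /implyP /(_ eii); by rewrite (negbTE (irr _)).
Qed.

Lemma injc_le_homc F G : injc F G <= homc F G.
Proof. apply: subset_leq_card; apply/subsetP => f; rewrite !inE => /andP []; by []. Qed.

Lemma cl_poset F : (forall i, ~~ @de (cl F) i i) -> is_poset (cl F).
Proof.
move=> irr; split => // i j k /existsP [l /andP [eil clj]] /existsP [l' /andP [ejl' cl'k]].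
apply/existsP; exists l; rewrite eil /=.
apply: connect_trans clj _; apply: connect_trans cl'k; exact: connect1.
Qed.

Definition Cc (F G : digraph) (S : {set 'I_(dv F) * 'I_(dv F)}) : nat :=
  #|[set f : {ffun 'I_(dv F) -> 'I_(dv G)} |
     [&& injectiveb f, is_hom f & [forall p in S, ~~ @de G (f p.1) (f p.2)]]]|.

Arguments Cc : clear implicits.

Definition addE (F : digraph) (e : 'I_(dv F) * 'I_(dv F)) : digraph :=
  @Digraph (dv F) (fun i j => @de F i j || ((i, j) == e)).

Arguments addE : clear implicits.

Lemma hom_addE F G e (f : {ffun 'I_(dv F) -> 'I_(dv G)}) :
  @is_hom (addE F e) G f = is_hom f && @de G (f e.1) (f e.2).
Proof.
apply/idP/andP => [hf|[hf he]].
  split.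
    apply/forallP => i; apply/forallP => j; apply/implyP => eij.
    by move: hf => /forallP /(_ i) /forallP /(_ j) /implyP; apply; rewrite /= eij.
  move: hf => /forallP /(_ e.1) /forallP /(_ e.2) /implyP; apply.
  by rewrite /= -surjective_pairing eqxx orbT.
apply/forallP => i; apply/forallP => j; apply/implyP => /orP [eij|/eqP E]; last by rewrite -E in he.
by move: hf => /forallP /(_ i) /forallP /(_ j) /implyP; apply.
Qed.

Lemma forall_U1 G (F : digraph) (f : {ffun 'I_(dv F) -> 'I_(dv G)}) S e :
  [forall p in e |: S, ~~ @de G (f p.1) (f p.2)] =
  ~~ @de G (f e.1) (f e.2) && [forall p in S, ~~ @de G (f p.1) (f p.2)].
Proof.
apply/forallP/andP => [H|[H1 /forallP H2] p].
  split; first by move: (H e); rewrite !inE eqxx.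
  apply/forallP => p; apply/implyP => pS; by move: (H p); rewrite !inE pS orbT.
by rewrite !inE; apply/implyP => /orP [/eqP ->//|pS]; move: (H2 p) => /implyP; apply.
Qed.

Lemma Cc_split F G (S : {set 'I_(dv F) * 'I_(dv F)}) (e : 'I_(dv F) * 'I_(dv F)) : e \notin S ->
  Cc F G (e |: S) + Cc (addE F e) G S = Cc F G S.
Proof.
move=> eS; rewrite /Cc.
rewrite addnC -[RHS](cardsID [set f : {ffun 'I_(dv F) -> 'I_(dv G)} | @de G (f e.1) (f e.2)]).
congr (_ + _).
  apply: eq_card => f; rewrite !inE hom_addE.
  by move: (injectiveb f) (@is_hom F G f) (@de G (f e.1) (f e.2)) ([forall p in S, ~~ @de G (f p.1) (f p.2)]) => [] [] [] [].
apply: eq_card => f; rewrite !inE forall_U1.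
by move: (injectiveb f) (@is_hom F G f) (@de G (f e.1) (f e.2)) ([forall p in S, ~~ @de G (f p.1) (f p.2)]) => [] [] [] [].
Qed.

Lemma Cc0 F G : Cc F G set0 = injc F G.
Proof.
apply: eq_card => f; rewrite !inE; congr (_ && _); case: (is_hom f); rewrite ?andbF ?andbT //.
by apply/forallP => p; rewrite inE.
Qed.

Definition Sc (F : digraph) : {set 'I_(dv F) * 'I_(dv F)} := [set p | ~~ @de F p.1 p.2].

Lemma Cc_ind F G :
  Cc F G (Sc F) = #|[set f : {ffun 'I_(dv F) -> 'I_(dv G)} | is_ind f]|.
Proof.
apply: eq_card => f; rewrite !inE /is_ind; case: (injectiveb f) => //=.
apply/andP/forallP => [[/forallP h1 /forallP h2] i|H]; first apply/forallP => j.
  case eij : (@de F i j).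
    by move: (h1 i) => /forallP /(_ j) /implyP /(_ eij) ->.
  by move: (h2 (i, j)); rewrite inE eij /= => /negbTE ->.
split; apply/forallP => i.
  apply/forallP => j; apply/implyP => eij.
  by move: (H i) => /forallP /(_ j); rewrite eij eq_sym => /eqP ->.
apply/implyP; rewrite inE => /negbTE e.
by move: (H i.1) => /forallP /(_ i.2); rewrite e eq_sym => /eqP ->.
Qed.

Lemma ind_poset F G (f : {ffun 'I_(dv F) -> 'I_(dv G)}) :
  is_poset G -> is_ind f -> is_poset F.
Proof.
move=> [irr tr] /andP [_ /forallP H].
have E i j : @de F i j = @de G (f i) (f j) by apply/eqP; move: (H i) => /forallP.
split => [i|i j k]; first by rewrite E.
rewrite !E; exact: tr.
Qed.

Definition ACg (k : nat) : digraph := @Digraph k (fun _ _ => false).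
Definition injtot (k m : nat) := #|[set f : {ffun 'I_k -> 'I_m} | injectiveb f]|.

Lemma injc_AC k G : injc (ACg k) G = injtot k (dv G).
Proof.
apply: eq_card => f; rewrite !inE; case: (injectiveb f) => //=.
by apply/forallP => i; apply/forallP => j.
Qed.

Lemma injtotE k m : injtot k m = m ^_ k.
Proof. by rewrite /injtot card_inj_ffuns !card_ord. Qed.

Lemma injc_le F G : injc F G <= injtot (dv F) (dv G).
Proof. apply: subset_leq_card; apply/subsetP => f; rewrite !inE => /andP []; by []. Qed.

Lemma Cc_le F G S : Cc F G S <= injtot (dv F) (dv G).
Proof. apply: subset_leq_card; apply/subsetP => f; rewrite !inE => /andP []; by []. Qed.

(* non-injective homs bounded by non-injective maps *)
Lemma homc_injc F G : homc F G <= injc F G + ((dv G) ^ (dv F) - injtot (dv F) (dv G)).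
Proof.
rewrite /homc /injc /injtot.
set Inj := [set f : {ffun 'I_(dv F) -> 'I_(dv G)} | injectiveb f].
set H := [set f : {ffun 'I_(dv F) -> 'I_(dv G)} | is_hom f].
rewrite -(cardsID Inj H).
have e1 : #|Inj| + #|~: Inj| = dv G ^ dv F by rewrite cardsC card_ffun !card_ord.
have l1 : #|H :&: Inj| <= #|[set f : {ffun 'I_(dv F) -> 'I_(dv G)} | injectiveb f && is_hom f]|.
  apply: subset_leq_card; apply/subsetP => f; rewrite !inE => /andP [-> ->]; by [].
have l2 : #|H :\: Inj| <= #|~: Inj|.
  apply: subset_leq_card; apply/subsetP => f; rewrite !inE => /andP [-> _]; by [].
rewrite -e1 addKn; exact: leq_add.
Qed.

End Part2.
Import Part2.

Module Part3.
Set Implicit Arguments. Unset Strict Implicit. Unset Printing Implicit Defensive.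
Local Open Scope R_scope.

Definition EC (a : nat -> nat) : Prop := exists N c, forall n, (N <= n)%N -> a n = c.

Lemma INR_close a b : Rabs (INR a - INR b) < 1 -> a = b.
Proof.
intros H. destruct (Nat.lt_total a b) as [h|[h|h]]; auto.
- assert (INR (S a) <= INR b) by (apply le_INR; lia). rewrite S_INR in H0.
  rewrite Rabs_left in H; lra.
- assert (INR (S b) <= INR a) by (apply le_INR; lia). rewrite S_INR in H0.
  rewrite Rabs_right in H; lra.
Qed.

Lemma conv_EC (u : nat -> R) (a : nat -> nat) (c : R) n0 : 0 < c ->
  (forall n, (n0 <= n)%N -> u n = INR (a n) / c) -> converges u -> EC a.
Proof.
intros Hc Hu [l Hl].
destruct (Hl (/ (2 * c))) as [N HN]. { apply Rlt_gt, Rinv_0_lt_compat; lra. }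
exists (maxn N n0), (a (maxn N n0)) => n Hn.
apply INR_close.
have H1 := HN n ltac:(move: Hn; rewrite geq_max => /andP [/leP h _]; lia).
have H2 := HN (maxn N n0) ltac:(rewrite /ge; apply/leP; exact: leq_maxl).
rewrite (Hu n) in H1; last by move: Hn; rewrite geq_max => /andP [].
rewrite (Hu (maxn N n0)) in H2; last exact: leq_maxr.
unfold R_dist in H1, H2.
set x := INR (a n) in H1 *. set y := INR (a (maxn N n0)) in H2 *.
have E : x - y = c * (x / c - l - (y / c - l)) by field; lra.
rewrite E Rabs_mult Rabs_right; last lra.
have : Rabs (x / c - l - (y / c - l)) < / c.
  eapply Rle_lt_trans; first exact: Rabs_triang.
  rewrite Rabs_Ropp. have -> : / c = / (2 * c) + / (2 * c) by field; lra. lra.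
move=> h. apply Rlt_le_trans with (c * / c); first by apply Rmult_lt_compat_l.
rewrite Rinv_r; lra.
Qed.

Lemma EC_conv (u : nat -> R) (a : nat -> nat) (f : nat -> R) n0 :
  (forall n, (n0 <= n)%N -> u n = f (a n)) -> EC a -> converges u.
Proof.
move=> Hu [N [c Hc]]; exists (f c) => eps Heps.
exists (maxn N n0) => n Hn. have Hn' : (maxn N n0 <= n)%N by apply/leP.
move: Hn'; rewrite geq_max => /andP [h1 h2].
rewrite Hu // Hc // /R_dist Rminus_diag Rabs_R0; lra.
Qed.

Lemma EC_ext (a b : nat -> nat) n0 : (forall n, (n0 <= n)%N -> a n = b n) -> EC b -> EC a.
Proof.
move=> H [N [c Hc]]; exists (maxn N n0), c => n; rewrite geq_max => /andP [h1 h2].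
by rewrite H // Hc.
Qed.

Lemma EC_sub (a b : nat -> nat) : EC a -> EC b -> EC (fun n => (a n - b n)%N).
Proof.
move=> [N1 [c1 H1]] [N2 [c2 H2]]; exists (maxn N1 N2), (c1 - c2)%N => n.
by rewrite geq_max => /andP [h1 h2]; rewrite H1 // H2.
Qed.

Lemma EC_sum (I : Type) (s : seq I) (P : pred I) (g : I -> nat -> nat) :
  (forall x, P x -> EC (g x)) -> EC (fun n => \sum_(x <- s | P x) g x n)%N.
Proof.
move=> H; elim: s => [|x s [N [c Hc]]].
  by exists 0%N, 0%N => n _; rewrite big_nil.
case Px : (P x).
  have [N' [c' Hc']] := H x Px.
  exists (maxn N N'), (c' + c)%N => n; rewrite geq_max => /andP [h1 h2].
  by rewrite big_cons Px Hc // Hc'.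
by exists N, c => n hn; rewrite big_cons Px Hc.
Qed.

Lemma EC_common (b : nat -> nat -> nat) : (forall j, EC (b j)) ->
  forall K, exists N, forall j, (j < K)%N -> forall n, (N <= n)%N -> b j n = b j N.
Proof.
move=> H; elim => [|K [N HN]]; first by exists 0%N.
have [N' [c Hc]] := H K.
exists (maxn N N') => j; rewrite ltnS leq_eqVlt => /orP [/eqP ->|jK] n.
  rewrite geq_max => /andP [_ h]; rewrite Hc // Hc //; exact: leq_maxr.
rewrite geq_max => /andP [h _].
rewrite HN // [in RHS]HN //; exact: leq_maxl.
Qed.

Lemma bound_R (h j i y m K : R) : 0 < i -> 0 < m -> 0 <= j -> j <= i -> j <= h -> h <= j + (y - i) -> i <= y ->
  m * (y - i) <= K * y -> Rabs (h / y - j / i) <= K / m.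
Proof.
intros Hi Hm Hj Hji Hjh Hh Hiy HK.
assert (Hy : 0 < y) by lra.
set (p := j / i). set (q := h / y).
assert (Ep : p * i = j) by (unfold p; field; lra).
assert (Eq : q * y = h) by (unfold q; field; lra).
assert (p0 : 0 <= p) by (unfold p; apply Rmult_le_pos; [lra| left; apply Rinv_0_lt_compat; lra]).
assert (p1 : p <= 1) by (unfold p; apply Rmult_le_reg_r with i; [lra| unfold Rdiv; rewrite Rmult_assoc Rinv_l; lra]).
assert (D : Rabs (q - p) * y <= y - i).
{ destruct (Rle_dec 0 (q - p)).
  - rewrite Rabs_right; last lra. nra.
  - rewrite Rabs_left; last lra. nra. }
assert (E : Rabs (q - p) <= (y - i) / y).
{ apply Rmult_le_reg_r with y; [lra|]. unfold Rdiv; rewrite Rmult_assoc Rinv_l; lra. }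
apply Rle_trans with ((y - i) / y); [exact E|].
apply Rmult_le_reg_r with (y * m); [nra|].
replace ((y - i) / y * (y * m)) with ((y - i) * m) by (field; lra).
replace (K / m * (y * m)) with (K * y) by (field; lra). lra.
Qed.

Lemma ffact_bound m k : (k <= m)%N -> (m ^_ k <= m ^ k)%N /\ (m * (m ^ k - m ^_ k) <= k * k * m ^ k)%N.
Proof.
elim: k => [|k IH] km; first by rewrite ffactn0 expn0 subnn muln0.
have [H1 H2] := IH (ltnW km).
rewrite ffactnSr expnS.
move: H1 H2; set x := (m ^_ k)%N; set y := (m ^ k)%N => H1 H2.
have H3 : (x * (m - k) <= m * y)%N by rewrite mulnC; apply: leq_mul (leq_subr _ _) H1.
split; first exact: H3.
have e : (m - k + k = m)%N by rewrite subnK // ltnW.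
move: (m - k)%N e H3 => d e H3; subst m.
nia.
Qed.

Lemma cv_transfer (u v : nat -> R) (m : nat -> nat) (C : R) l N0 :
  Un_cv u l -> (forall n, (N0 <= n)%N -> Rabs (u n - v n) <= C / INR (m n)) ->
  (forall B, exists n0, forall n, (n0 <= n)%N -> (B <= m n)%N) -> Un_cv v l.
Proof.
move=> Hu Hd Hm eps Heps.
have [N1 HN1] := Hu (eps / 2) ltac:(lra).
pose B := Z.to_nat (up (2 * Rabs C / eps)).
have [n1 Hn1] := Hm (B.+1).
exists (maxn (maxn N1 N0) n1) => n Hn.
have Hn' : (maxn (maxn N1 N0) n1 <= n)%N by apply/leP.
move: Hn'; rewrite !geq_max => /andP [/andP [h1 h2] h3].
have := HN1 n ltac:(apply/leP; exact: h1). rewrite /R_dist => H1.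
have H2 := Hd n h2. have H3 := Hn1 n h3.
have Hmpos : INR B < INR (m n) by apply: lt_INR; apply/ltP.
have HB : 2 * Rabs C / eps <= INR B.
  rewrite /B INR_IZR_INZ Z2Nat.id.
    have [h _] := archimed (2 * Rabs C / eps); lra.
  have [h _] := archimed (2 * Rabs C / eps).
  have : 0 <= 2 * Rabs C / eps by apply Rmult_le_pos; [have := Rabs_pos C; lra| left; apply Rinv_0_lt_compat; lra].
  move=> h0; apply: le_IZR; lra.
have Hm0 : 0 < INR (m n).
  have := pos_INR B; lra.
have H4 : C / INR (m n) <= eps / 2.
  apply Rmult_le_reg_r with (INR (m n)); first lra.
  rewrite /Rdiv Rmult_assoc Rinv_l; last lra.
  have : Rabs C * 2 <= eps * INR (m n).
    have : 2 * Rabs C <= eps * INR B.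
      have E : 2 * Rabs C = (2 * Rabs C / eps) * eps by field; lra.
      rewrite E; nra.
    nra.
  have := Rle_abs C; nra.
rewrite /R_dist.
have -> : v n - l = (u n - l) - (u n - v n) by ring.
eapply Rle_lt_trans; first exact: Rabs_triang.
rewrite Rabs_Ropp; lra.
Qed.

End Part3.
Import Part3.

Module Part4.
Set Implicit Arguments. Unset Strict Implicit. Unset Printing Implicit Defensive.
Local Open Scope R_scope.

Lemma tE F G : t F G = INR (homc F G) / INR (dv G ^ dv F)%N.
Proof. by []. Qed.
Lemma t_injE F G : t_inj F G =
  if (dv G < dv F)%N then 0 else INR (injc F G) / INR (injtot (dv F) (dv G)).
Proof. by []. Qed.

Lemma injtot_pos k m : (k <= m)%N -> 0 < INR (injtot k m).
Proof. move=> h; apply: lt_0_INR; apply/ltP; by rewrite injtotE ffact_gt0. Qed.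

Lemma injc_small F G : (dv G < dv F)%N -> injc F G = 0%N.
Proof.
move=> h; apply/eqP; rewrite -leqn0; apply: leq_trans (injc_le F G) _.
by rewrite injtotE ffact_small.
Qed.

Section Main.
Variable P : nat -> digraph.
Hypothesis HP : forall n, nonempty (P n) /\ is_poset (P n).

Definition Hall := forall F, nonempty F -> converges (fun n => t F (P n)).
Definition Iall := forall F, nonempty F -> converges (fun n => t_inj F (P n)).
Definition Dall := forall F, nonempty F -> converges (fun n => t_ind F (P n)).

Section Const.
Variables (M n0 : nat).
Hypothesis HM : forall n, (n0 <= n)%N -> dv (P n) = M.

Lemma M_pos : (0 < M)%N.
Proof. rewrite -(HM (leqnn n0)); exact: (proj1 (HP n0)). Qed.

Lemma t_const F n : (n0 <= n)%N -> t F (P n) = INR (homc F (P n)) / INR (M ^ dv F)%N.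
Proof. move=> h; by rewrite tE HM. Qed.

Lemma t_inj_const F n : (n0 <= n)%N -> t_inj F (P n) =
  (fun x => if (M < dv F)%N then 0 else INR x / INR (injtot (dv F) M)) (injc F (P n)).
Proof. move=> h; by rewrite t_injE HM. Qed.

Lemma homEC F : converges (fun n => t F (P n)) -> EC (fun n => homc F (P n)).
Proof.
apply: (@conv_EC _ _ (INR (M ^ dv F)%N) n0); last exact: t_const.
apply: lt_0_INR; apply/ltP; rewrite expn_gt0 M_pos //.
Qed.

Lemma injEC_of F : converges (fun n => t_inj F (P n)) -> EC (fun n => injc F (P n)).
Proof.
move=> cv; case: (ltnP M (dv F)) => h.
  exists n0, 0%N => n hn; apply: injc_small; by rewrite HM.
apply: (@conv_EC _ _ (INR (injtot (dv F) M)) n0 (injtot_pos h)) cv => n hn.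
by rewrite t_inj_const //= ltnNge h.
Qed.

Lemma const_H_to_I : Hall -> Iall.
Proof.
move=> HH.
have key : forall K F, nonempty F -> (dv F < K)%N -> EC (fun n => injc F (P n)).
  elim => [//|K IH] F neF hK.
  apply: (@EC_ext _ (fun n => homc F (P n) -
       \sum_(r | valid r && (r != idf _)) injc (quot F r) (P n))%N 0%N).
    by move=> n _; rewrite hom_decomp2 addnK.
  apply: EC_sub; first exact: homEC (HH F neF).
  apply: EC_sum => r /andP [vr nid]; apply: IH; first exact: quot_nonempty.
  by rewrite /=; apply: leq_trans (reps_lt vr nid) _.
move=> F neF; apply: (@EC_conv _ (fun n => injc F (P n)) _ n0 (t_inj_const F)).
exact: key (dv F).+1 F neF (ltnSn _).
Qed.

Lemma const_I_to_H : Iall -> Hall.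
Proof.
move=> HI F neF; apply: (@EC_conv _ (fun n => homc F (P n)) (fun x => INR x / INR (M ^ dv F)%N) n0 (t_const F)).
apply: (@EC_ext _ (fun n => \sum_(r | valid r) injc (quot F r) (P n))%N 0%N).
  by move=> n _; rewrite hom_decomp.
apply: EC_sum => r vr; apply: injEC_of; apply: HI; exact: quot_nonempty.
Qed.
End Const.

Section Inf.
Hypothesis Hinf : forall B, exists n0, forall n, (n0 <= n)%N -> (B <= dv (P n))%N.

Lemma diff_bound F n : (dv F <= dv (P n))%N ->
  Rabs (t F (P n) - t_inj F (P n)) <= INR (dv F * dv F)%N / INR (dv (P n)).
Proof.
move=> hk; rewrite tE t_injE ltnNge hk /=.
have [b1 b2] := ffact_bound hk.
have hI := injtotE (dv F) (dv (P n)).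
have h1 := injc_le F (P n). have h2 := injc_le_homc F (P n). have h3 := homc_injc F (P n).
rewrite hI in h1 h3 *.
have mpos : (0 < dv (P n))%N := proj1 (HP n).
apply: bound_R.
- apply: lt_0_INR; apply/ltP; by rewrite ffact_gt0.
- apply: lt_0_INR; exact/ltP.
- exact: pos_INR.
- apply: le_INR; exact/leP.
- apply: le_INR; exact/leP.
- rewrite -minus_INR; last exact/leP.
  rewrite -plus_INR; apply: le_INR; exact/leP.
- apply: le_INR; exact/leP.
- rewrite -minus_INR; last exact/leP.
  rewrite -!mult_INR; apply: le_INR; exact/leP.
Qed.

Lemma inf_equiv F : converges (fun n => t F (P n)) <-> converges (fun n => t_inj F (P n)).
Proof.
have [N0 HN0] := Hinf (dv F).
split => [[l Hl]|[l Hl]]; exists l.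
  apply: (cv_transfer (u := fun n => t F (P n)) (C := INR (dv F * dv F)%N) (N0 := N0) Hl _ Hinf).
  by move=> n hn; apply: diff_bound; apply: HN0.
apply: (cv_transfer (u := fun n => t_inj F (P n)) (C := INR (dv F * dv F)%N) (N0 := N0) Hl _ Hinf).
by move=> n hn; rewrite Rabs_minus_sym; apply: diff_bound; apply: HN0.
Qed.
End Inf.

Lemma H_to_I : Hall -> nat_converges_ext (fun n => dv (P n)) -> Iall.
Proof.
move=> HH [[M [n0 HM]]|Hinf].
  apply: (const_H_to_I (M := M) (n0 := n0)) => // n hn; exact: HM.
move=> F neF; apply/(inf_equiv Hinf); exact: HH.
Qed.
End Main.

End Part4.
Import Part4.

Module Part5.
Set Implicit Arguments. Unset Strict Implicit. Unset Printing Implicit Defensive.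
Local Open Scope R_scope.

Lemma conv_ext (u v : nat -> R) : (forall n, u n = v n) -> converges v -> converges u.
Proof. move=> e [l H]; exists l => eps he; have [N HN] := H eps he; exists N => n hn; rewrite e; exact: HN. Qed.

Lemma conv_const (u : nat -> R) c : (forall n, u n = c) -> converges u.
Proof. move=> e; exists c => eps he; exists 0%nat => n _; rewrite e /R_dist Rminus_diag Rabs_R0; lra. Qed.

Lemma NC_of (m : nat -> nat) : (forall j, EC (fun n => nat_of_bool (j <= m n)%N)) -> nat_converges_ext m.
Proof.
move=> H.
destruct (classic (forall B, exists n0, forall n, (n0 <= n)%N -> (B <= m n)%N)) as [h|h]; [right => //|left].
have [B hB] := not_all_ex_not _ _ h.
have [N [c Hc]] := H B.
have small : forall n, (N <= n)%N -> (m n < B)%N.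
  move=> n hn; rewrite ltnNge; apply/negP => hBn.
  apply: hB; exists N => n' hn'.
  have := Hc n' hn'; rewrite -(Hc n hn) hBn.
  by case: (B <= m n')%N.
have [N' HN'] := EC_common H B.+1.
exists (m (maxn N N')), (maxn N N') => n hn.
have hN1 : (N <= maxn N N')%N by exact: leq_maxl.
have hN2 : (N' <= maxn N N')%N by exact: leq_maxr.
have hn1 : (N' <= n)%N := leq_trans hN2 hn.
have hlt := small _ hN1.
have e j : (j < B.+1)%N -> ((j <= m n) = (j <= m (maxn N N')))%N.
  move=> hj; have := HN' j hj n hn1; rewrite -(HN' j hj _ hN2).
  by case: (j <= m n)%N; case: (j <= m (maxn N N'))%N.
apply/eqP; rewrite eqn_leq; apply/andP; split.
  have := e (m (maxn N N')).+1 hlt; rewrite ltnn => /negbT; by rewrite -ltnNge ltnS.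
by rewrite e ?leqnn // ltnS ltnW.
Qed.

Definition Ct (F G : digraph) (S : {set 'I_(dv F) * 'I_(dv F)}) : R :=
  if (dv G < dv F)%N then 0 else INR (Cc F G S) / INR (injtot (dv F) (dv G)).
Arguments Ct : clear implicits.

Lemma Ct_split F G (S : {set 'I_(dv F) * 'I_(dv F)}) e : e \notin S ->
  Ct F G (e |: S) = Ct F G S - Ct (addE F e) G S.
Proof.
move=> eS; rewrite /Ct /=; case: ifP => _; first ring.
rewrite -(Cc_split G eS) plus_INR /Rdiv Rmult_plus_distr_r /Rminus Rplus_assoc Rplus_opp_r Rplus_0_r. reflexivity.
Qed.

Lemma Ct0 F G : t_inj F G = Ct F G set0.
Proof. by rewrite t_injE /Ct Cc0. Qed.

Lemma Ctind F G : t_ind F G = Ct F G (Sc F).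
Proof. by rewrite /t_ind /Ct Cc_ind. Qed.

Lemma Sc_addE F e : Sc (addE F e) = Sc F :\ e.
Proof.
apply/setP => p; rewrite !inE /= negb_or andbC; congr (_ && _); by rewrite -surjective_pairing.
Qed.

Section Main2.
Variable P : nat -> digraph.
Hypothesis HP : forall n, nonempty (P n) /\ is_poset (P n).

Lemma I_to_NC : Iall P -> nat_converges_ext (fun n => dv (P n)).
Proof.
move=> HI; apply: NC_of => j.
case: j => [|j]; first by exists 0%N, 1%N.
have ne : nonempty (ACg j.+1) by [].
apply: (@conv_EC _ _ 1 0%N Rlt_0_1 _ (HI _ ne)) => n _.
rewrite t_injE injc_AC /=; case: ltnP => h /=.
  by rewrite /Rdiv Rmult_0_l.
rewrite /Rdiv Rinv_r; first by rewrite Rinv_1 Rmult_1_l.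
by apply: Rgt_not_eq; apply: injtot_pos.
Qed.

Lemma I_to_H : Iall P -> Hall P /\ nat_converges_ext (fun n => dv (P n)).
Proof.
move=> HI; have NC := I_to_NC HI; split => //.
case: NC => [[M [n0 HM]]|Hinf].
  apply: (const_I_to_H (M := M) (n0 := n0)) => // n hn; exact: HM.
move=> F neF; apply/(inf_equiv HP Hinf); exact: HI.
Qed.

Lemma I_to_D : Iall P -> Dall P.
Proof.
move=> HI.
have key : forall s F (S : {set 'I_(dv F) * 'I_(dv F)}), nonempty F -> #|S| = s ->
    converges (fun n => Ct F (P n) S).
  elim => [|s IH] F S neF hS.
    rewrite (cards0_eq hS); apply: conv_ext (HI F neF) => n; by rewrite Ct0.
  have : (0 < #|S|)%N by rewrite hS.
  move=> /card_gt0P [e eS].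
  rewrite -(setD1K eS).
  have eS' : e \notin S :\ e by rewrite setD11.
  have hS' : #|S :\ e| = s by move: hS; rewrite (cardsD1 e) eS add1n => [[]].
  have [l1 H1] := IH F _ neF hS'.
  have [l2 H2] := IH (addE F e) (S :\ e) neF hS'.
  exists (l1 - l2); apply: (Un_cv_ext (fun n => Ct F (P n) (S :\ e) - Ct (addE F e) (P n) (S :\ e))).
    by move=> n; rewrite Ct_split.
  exact: CV_minus.
move=> F neF; apply: conv_ext (key _ F (Sc F) neF erefl) => n; by rewrite Ctind.
Qed.

Lemma D_to_I : Dall P -> Iall P.
Proof.
move=> HD.
have key : forall d F (S : {set 'I_(dv F) * 'I_(dv F)}), nonempty F -> S \subset Sc F ->
    #|Sc F :\: S| = d -> converges (fun n => Ct F (P n) S).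
  elim => [|d IH] F S neF sS hd.
    have : Sc F \subset S by rewrite -setD_eq0 -cards_eq0 hd.
    move=> sS'; have -> : S = Sc F by apply/eqP; rewrite eqEsubset sS.
    apply: conv_ext (HD F neF) => n; by rewrite Ctind.
  have : (0 < #|Sc F :\: S|)%N by rewrite hd.
  move=> /card_gt0P [e]; rewrite inE => /andP [eS eSc].
  have hd' : #|(Sc F :\: S) :\ e| = d.
    by move: hd; rewrite (cardsD1 e) in_setD eS eSc add1n => [[]].
  have H1 := IH F (e |: S) neF.
  have H2 := IH (addE F e) S neF.
  have [l1 C1] : converges (fun n => Ct F (P n) (e |: S)).
    apply: H1.
      by rewrite subUset sub1set eSc sS.
    by rewrite -hd'; apply: eq_card => p; rewrite !inE; case: (p == e).
  have [l2 C2] : converges (fun n => Ct (addE F e) (P n) S).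
    apply: H2.
      rewrite Sc_addE; apply/subsetP => p pS; rewrite !inE.
      have -> : p != e by apply/eqP => pe; rewrite -pe pS in eS.
      by move/subsetP: sS => /(_ p pS); rewrite inE.
    by rewrite -hd' Sc_addE; apply: eq_card => p; rewrite !inE; case: (p == e); case: (p \in S).
  exists (l1 + l2); apply: (Un_cv_ext (fun n => Ct F (P n) (e |: S) + Ct (addE F e) (P n) S)).
    move=> n; rewrite Ct_split ?eS //; ring.
  exact: CV_plus.
move=> F neF; apply: conv_ext (key _ F set0 neF (sub0set _) erefl) => n; by rewrite Ct0.
Qed.

Lemma Hp_to_H : (forall Q, nonempty Q -> is_poset Q -> converges (fun n => t Q (P n))) -> Hall P.
Proof.
move=> Hp F neF.
case: (boolP [exists i, @de (cl F) i i]) => [/existsP [i hi]|hno].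
  apply: (conv_const (c := 0)) => n.
  by rewrite tE (homc_cl _ (proj2 (HP n))) (homc_loop (proj2 (HP n)) hi) /Rdiv Rmult_0_l.
apply: conv_ext (Hp (cl F) neF _) => [n|].
  by rewrite !tE (homc_cl _ (proj2 (HP n))).
apply: cl_poset => i; apply/negP => hi; move/negP: hno; apply; apply/existsP; by exists i.
Qed.

Lemma Ip_to_I : (forall Q, nonempty Q -> is_poset Q -> converges (fun n => t_inj Q (P n))) -> Iall P.
Proof.
move=> Hp F neF.
case: (boolP [exists i, @de (cl F) i i]) => [/existsP [i hi]|hno].
  apply: (conv_const (c := 0)) => n.
  rewrite t_injE (injc_cl _ (proj2 (HP n))).
  have -> : injc (cl F) (P n) = 0%N.
    apply/eqP; rewrite -leqn0 -(homc_loop (proj2 (HP n)) hi); exact: injc_le_homc.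
  by case: ifP => _; rewrite // /Rdiv Rmult_0_l.
apply: conv_ext (Hp (cl F) neF _) => [n|].
  by rewrite !t_injE (injc_cl _ (proj2 (HP n))).
apply: cl_poset => i; apply/negP => hi; move/negP: hno; apply; apply/existsP; by exists i.
Qed.

Lemma Dp_to_D : (forall Q, nonempty Q -> is_poset Q -> converges (fun n => t_ind Q (P n))) -> Dall P.
Proof.
move=> Hp F neF.
destruct (classic (is_poset F)) as [pF|npF]; first exact: Hp.
apply: (conv_const (c := 0)) => n.
rewrite /t_ind.
have -> : #|[set f : {ffun 'I_(dv F) -> 'I_(dv (P n))} | is_ind f]| = 0%N.
  apply/eqP; rewrite cards_eq0; apply/eqP/setP => f; rewrite !inE.
  apply/negP => hf; apply: npF; exact: (ind_poset (proj2 (HP n)) hf).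
by case: ifP => _; rewrite // /Rdiv Rmult_0_l.
Qed.
End Main2.

End Part5.
Import Part5.


Theorem theorem3p1 (P : nat -> digraph)
  (HP : forall n, nonempty (P n) /\ is_poset (P n)) :
  [<->
   (forall Q, nonempty Q -> is_poset Q -> converges (fun n => t Q (P n)))
     /\ nat_converges_ext (fun n => dv (P n));
   forall Q, nonempty Q -> is_poset Q -> converges (fun n => t_inj Q (P n));
   forall Q, nonempty Q -> is_poset Q -> converges (fun n => t_ind Q (P n));
   (forall F, nonempty F -> converges (fun n => t F (P n)))
     /\ nat_converges_ext (fun n => dv (P n));
   forall F, nonempty F -> converges (fun n => t_inj F (P n));
   forall F, nonempty F -> converges (fun n => t_ind F (P n))].
Proof.
tfae.
- move=> [Hp NC] Q neQ _; exact: (H_to_I HP (Hp_to_H HP Hp) NC).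
- move=> Ip Q neQ _; exact: (I_to_D (Ip_to_I HP Ip)).
- move=> Dp; exact: (I_to_H HP (D_to_I (Dp_to_D HP Dp))).
- move=> [HH NC]; exact: (H_to_I HP HH NC).
- move=> HI; exact: (I_to_D HI).
- move=> HD; have [HH NC] := I_to_H HP (D_to_I HD); split => // Q neQ _; exact: HH.
Qed.
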